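(* Let $\mu$ be any example distribution. If $\mu$ has finite support, then $\preceq^{\mu}$ is well-founded. This does not necessarily hold when $\mu$ has infinite support: there exists an example distribution $\mu$ with infinite support such that $\preceq^{\mu}$ is not well-founded.
   Context: Data examples are pairs $(I,\mathbf a)$ with $I$ a finite database instance and $\mathbf a$ a tuple of its values. CQs are $q(x_1,\dots,x_k)\text{ :- }\alpha_1,\dots,\alpha_n$ (relational atoms, no constants, each answer variable in some atom); $[\![q]\!]$ is the set of data examples $(I,\mathbf a)$ with $\mathbf a\in q(I)$. An example distribution is a discrete probability distribution $\mu$ over data examples. $\mathrm{dist}_\mu(q,q')=\mu([\![q]\!]\oplus[\![q']\!])$ ($\oplus$ symmetric difference), i.e. the probability of drawing an example on which $q$ and $q'$ disagree. $q'\preceq^{\mu}_q q''$ iff $\mathrm{dist}_\mu(q,q')\le\mathrm{dist}_\mu(q,q'')$. The pre-order family $\preceq^\mu$ is well-founded if for every CQ $q$, every non-empty set of CQs has a $\preceq^\mu_q$-minimal element (equivalently, there is no infinite strictly descending chain $\cdots\prec_q q_2\prec_q q_1\prec_q q_0$, where $\prec_q$ is the strict part of $\preceq^\mu_q$). *)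

(* Defs.v *)
From Stdlib Require Import Reals List Arith ClassicalEpsilon.
From Coquelicot Require Import Coquelicot.
Import ListNotations.
Open Scope R_scope.

(** A schema: relation symbol [r] (a natural number [r < length sch])
    has arity [nth r sch 0]. *)
Definition schema := list nat.

Definition value := nat.
Definition var := nat.

Definition fact := (nat * list value)%type.
Definition atom := (nat * list var)%type.

Definition well_typed (sch : schema) (f : nat * list nat) : Prop :=
  (fst f < length sch)%nat /\ length (snd f) = nth (fst f) sch 0%nat.

Definition instance := list fact.
Definition wf_instance (sch : schema) (I : instance) : Prop :=
  forall f, In f I -> well_typed sch f.

Definition in_adom (I : instance) (v : value) : Prop :=
  exists f, In f I /\ In v (snd f).

Definition data_example := (instance * list value)%type.
Definition wf_example (sch : schema) (e : data_example) : Prop :=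
  wf_instance sch (fst e) /\ forall v, In v (snd e) -> in_adom (fst e) v.

(** Conjunctive query q(x_1..x_k) :- alpha_1, ..., alpha_n :
    answer variables, list of relational atoms (no constants). *)
Record CQ := mkCQ { cq_ans : list var; cq_body : list atom }.

Definition wf_CQ (sch : schema) (q : CQ) : Prop :=
  cq_body q <> [] /\
  (forall at_, In at_ (cq_body q) -> well_typed sch at_) /\
  (forall x, In x (cq_ans q) -> exists at_, In at_ (cq_body q) /\ In x (snd at_)).

Definition answer (q : CQ) (I : instance) (a : list value) : Prop :=
  exists h : var -> value,
    map h (cq_ans q) = a /\
    forall at_, In at_ (cq_body q) -> In (fst at_, map h (snd at_)) I.

Definition denot (q : CQ) (e : data_example) : Prop := answer q (fst e) (snd e).

(** A discrete probability distribution over (well-formed) data examples,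
    presented by a countable enumeration [ex] of data examples with weights
    [w] (nonnegative, summing to 1).  The probability of e is the sum of the
    weights w n with ex n = e.  Every discrete distribution arises this way. *)
Record ExDist (sch : schema) := mkExDist {
  ex : nat -> data_example;
  w : nat -> R;
  w_nonneg : forall n, 0 <= w n;
  w_sum : is_series w 1;
  ex_wf : forall n, wf_example sch (ex n)
}.
Arguments ex {sch}.
Arguments w {sch}.

Definition indicator (P : Prop) : R :=
  if excluded_middle_informative P then 1 else 0.

Definition prob {sch} (mu : ExDist sch) (A : data_example -> Prop) : R :=
  Series (fun n => w mu n * indicator (A (ex mu n))).

Definition in_support {sch} (mu : ExDist sch) (e : data_example) : Prop :=
  exists n, 0 < w mu n /\ ex mu n = e.

Definition finite_support {sch} (mu : ExDist sch) : Prop :=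
  exists L : list data_example, forall e, in_support mu e -> In e L.

Definition dist {sch} (mu : ExDist sch) (q q' : CQ) : R :=
  prob mu (fun e => ~ (denot q e <-> denot q' e)).

Definition preceq {sch} (mu : ExDist sch) (q q' q'' : CQ) : Prop :=
  dist mu q q' <= dist mu q q''.

Definition well_founded_family {sch} (mu : ExDist sch) : Prop :=
  forall q : CQ, wf_CQ sch q ->
  forall S : CQ -> Prop,
    (forall q', S q' -> wf_CQ sch q') ->
    (exists q', S q') ->
    exists m, S m /\
      forall q'', S q'' -> ~ (preceq mu q q'' m /\ ~ preceq mu q m q'').

(* Main.v *)
Require Import Defs.
From Stdlib Require Import Reals List.
From Coquelicot Require Import Coquelicot.
From Stdlib Require Import Lia Lra Classical ClassicalEpsilon.
Import ListNotations.
Open Scope R_scope.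

Fixpoint subseqs {A} (l : list A) : list (list A) :=
  match l with
  | [] => [[]]
  | x :: t => map (cons x) (subseqs t) ++ subseqs t
  end.

Lemma filter_in_subseqs {A} (f : A -> bool) (l : list A) :
  In (filter f l) (subseqs l).
Proof.
  induction l as [|x t IH]; simpl; auto.
  apply in_or_app. destruct (f x); [left; apply in_map; exact IH | right; exact IH].
Qed.

Lemma indicator_iff (P Q : Prop) : (P <-> Q) -> indicator P = indicator Q.
Proof.
  intros H; unfold indicator.
  destruct (excluded_middle_informative P), (excluded_middle_informative Q); tauto.
Qed.

Lemma prob_ext {sch} (mu : ExDist sch) (P Q : data_example -> Prop) :
  (forall e, in_support mu e -> (P e <-> Q e)) -> prob mu P = prob mu Q.
Proof.
  intros H. unfold prob. apply Series_ext. intros n.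
  destruct (w_nonneg _ mu n) as [Hp|H0].
  - rewrite (indicator_iff (P (ex mu n)) (Q (ex mu n))); auto.
    apply H. exists n; auto.
  - rewrite <- H0. ring.
Qed.

Definition bdec (P : Prop) : bool :=
  if excluded_middle_informative P then true else false.

Lemma prob_in_list {sch} (mu : ExDist sch) (L : list data_example) :
  (forall e, in_support mu e -> In e L) ->
  forall P, In (prob mu P) (map (fun bs => prob mu (fun e => In e bs)) (subseqs L)).
Proof.
  intros HL P.
  set (bs := filter (fun e => bdec (P e)) L).
  replace (prob mu P) with (prob mu (fun e => In e bs)).
  - apply (in_map (fun bs0 => prob mu (fun e => In e bs0))). apply filter_in_subseqs.
  - apply prob_ext. intros e He. unfold bs. rewrite filter_In.
    unfold bdec. destruct (excluded_middle_informative (P e)).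
    + split; [tauto| intros _; split; auto].
    + split; [intros [_ H]; discriminate | tauto].
Qed.

Lemma list_min (l : list R) (A : R -> Prop) :
  (exists x, In x l /\ A x) ->
  exists x, In x l /\ A x /\ forall y, In y l -> A y -> x <= y.
Proof.
  induction l as [|a t IH]; intros [x [Hx HA]].
  - destruct Hx.
  - destruct (classic (exists x, In x t /\ A x)) as [Ht|Ht].
    + destruct (IH Ht) as [m [Hm [HAm Hmin]]].
      destruct (Rle_dec m a) as [Hle|Hle].
      * exists m. split; [right; auto|]. split; auto.
        intros y [<-|Hy] HAy; auto.
      * destruct (classic (A a)) as [Ha|Ha].
        -- exists a. split; [left; auto|]. split; auto.
           intros y [<-|Hy] HAy; [lra|]. specialize (Hmin y Hy HAy). lra.
        -- exists m. split; [right; auto|]. split; auto.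
           intros y [<-|Hy] HAy; [contradiction|auto].
    + destruct Hx as [<-|Hx]; [|exfalso; apply Ht; eauto].
      exists a. split; [left; auto|]. split; auto.
      intros y [<-|Hy] HAy; [lra|]. exfalso; apply Ht; eauto.
Qed.

Lemma part1 (sch : schema) (mu : ExDist sch) :
  finite_support mu -> well_founded_family mu.
Proof.
  intros [L HL] q _ S _ [q0 Hq0].
  set (V := map (fun bs => prob mu (fun e => In e bs)) (subseqs L)).
  destruct (list_min V (fun v => exists q', S q' /\ Defs.dist mu q q' = v)) as
    [x [Hx [[m [Hm Hmx]] Hmin]]].
  - exists (Defs.dist mu q q0). split; [apply prob_in_list; auto| eauto].
  - exists m. split; auto. intros q'' Hq'' [_ Hn]. apply Hn.
    unfold preceq. rewrite Hmx. apply Hmin; [apply prob_in_list; auto| eauto].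
Qed.

Definition sch0 : schema := [1%nat].
Definition I0 : instance := [(0%nat, [0%nat])].
Definition exs (n : nat) : data_example := (I0, repeat 0%nat n).
Definition ws (n : nat) : R := (1/2) ^ (S n).

Lemma ws_pos n : 0 < ws n.
Proof. unfold ws. apply pow_lt. lra. Qed.

Lemma ws_sum : is_series ws 1.
Proof.
  assert (H := is_series_scal (1/2) _ _ (is_series_geom (1/2) ltac:(rewrite Rabs_pos_eq; lra))).
  replace 1 with (scal (1/2) (/ (1 - 1/2))).
  - eapply is_series_ext; [|exact H]. intros n. unfold ws, scal; simpl.
    unfold mult; simpl. reflexivity.
  - unfold scal; simpl; unfold mult; simpl. field.
Qed.

Lemma repeat_in (x n : nat) v : In v (repeat x n) -> v = x.
Proof. apply repeat_spec. Qed.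

Lemma exs_wf n : wf_example sch0 (exs n).
Proof.
  split.
  - intros f [<-|[]]. unfold well_typed; simpl. split; auto.
  - intros v Hv. simpl in Hv. apply repeat_in in Hv. subst.
    exists (0%nat, [0%nat]). simpl. auto.
Qed.

Definition mu0 : ExDist sch0 := mkExDist sch0 exs ws (fun n => Rlt_le _ _ (ws_pos n)) ws_sum exs_wf.

Definition qk (k : nat) : CQ := mkCQ (repeat 0%nat k) [(0%nat, [0%nat])].

Lemma qk_wf k : wf_CQ sch0 (qk k).
Proof.
  split; [discriminate|]. split.
  - intros a [<-|[]]. unfold well_typed; simpl; auto.
  - intros x Hx. simpl in Hx. apply repeat_in in Hx. subst.
    exists (0%nat, [0%nat]). simpl; auto.
Qed.

Lemma map_const_repeat (k : nat) : map (fun _ : nat => 0%nat) (repeat 0%nat k) = repeat 0%nat k.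
Proof. induction k; simpl; congruence. Qed.

Lemma denot_qk k n : denot (qk k) (exs n) <-> k = n.
Proof.
  unfold denot, answer; simpl. split.
  - intros [h [Hm _]]. apply (f_equal (@length nat)) in Hm.
    rewrite length_map, !repeat_length in Hm. exact Hm.
  - intros <-. exists (fun _ => 0%nat). split; [apply map_const_repeat|].
    intros a [<-|[]]. simpl. auto.
Qed.

Definition single (j : nat) (x : R) (n : nat) : R := if Nat.eq_dec n j then x else 0.

Lemma sum_single j x N : sum_n (single j x) N = if Compare_dec.le_dec j N then x else 0.
Proof.
  induction N.
  - rewrite sum_O. unfold single. destruct (Nat.eq_dec 0 j), (Compare_dec.le_dec j 0); try lia; auto.
  - rewrite sum_Sn, IHN. unfold single.
    destruct (Compare_dec.le_dec j N), (Nat.eq_dec (S N) j), (Compare_dec.le_dec j (S N)); try lia;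
    unfold plus; simpl; ring.
Qed.

Lemma is_series_single j x : is_series (single j x) x.
Proof.
  change (is_lim_seq (sum_n (single j x)) x).
  eapply is_lim_seq_ext_loc; [|apply is_lim_seq_const].
  exists j. intros n Hn. rewrite sum_single. destruct (Compare_dec.le_dec j n); [auto|lia].
Qed.

Lemma dist_qk k : (1 <= k)%nat -> Defs.dist mu0 (qk 0) (qk k) = ws 0 + ws k.
Proof.
  intros Hk. unfold Defs.dist, prob. apply is_series_unique.
  eapply is_series_ext; [|apply (is_series_plus _ _ _ _ (is_series_single 0 (ws 0)) (is_series_single k (ws k)))].
  intros n. simpl. unfold plus; simpl. unfold single, indicator.
  destruct (excluded_middle_informative _) as [H|H];
    rewrite !denot_qk in H;
    destruct (Nat.eq_dec n 0), (Nat.eq_dec n k); subst; try lia; try ring;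
    exfalso; apply H; lia.
Qed.

Lemma ws_decr k : ws (S k) < ws k.
Proof. unfold ws. simpl. assert (H := pow_lt (1/2) k ltac:(lra)). nra. Qed.

Lemma part2 : exists (sch : schema) (mu : ExDist sch),
      ~ finite_support mu /\ ~ well_founded_family mu.
Proof.
  exists sch0, mu0. split.
  - intros [L HL].
    set (M := fold_right (fun e m => Nat.max (length (snd e)) m) 0%nat L).
    assert (HM : forall e, In e L -> (length (snd e) <= M)%nat).
    { unfold M; clear. induction L as [|a t IH]; simpl; [tauto|].
      intros e [<-|He]; [lia|]. specialize (IH e He). lia. }
    assert (Hin : In (exs (S M)) L).
    { apply HL. exists (S M). split; [apply ws_pos| reflexivity]. }
    specialize (HM _ Hin). simpl in HM. rewrite repeat_length in HM. lia.
  - intros Hwf.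
    destruct (Hwf (qk 0) (qk_wf 0) (fun q => exists k, (1 <= k)%nat /\ q = qk k))
      as [m [[k [Hk ->]] Hmin]].
    + intros q' [k [_ ->]]. apply qk_wf.
    + exists (qk 1). exists 1%nat. auto.
    + apply (Hmin (qk (S k))); [exists (S k); split; auto; lia|].
      unfold preceq. rewrite !dist_qk; try lia.
      assert (H := ws_decr k). split; lra.
Qed.

Theorem proposition52 :
  (forall (sch : schema) (mu : ExDist sch),
      finite_support mu -> well_founded_family mu) /\
  (exists (sch : schema) (mu : ExDist sch),
      ~ finite_support mu /\ ~ well_founded_family mu).
Proof.
  split; [exact part1 | exact part2].
Qed.
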